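(* Let $(V,\sim)$ be a finite graph equipped with the side data $\mathrm{left}(\cdot),\mathrm{right}(\cdot)$ described in the context, and assume that $(V,\sim)$ admits a conformal model. Let $Q \subseteq V$ be a prime node of the modular decomposition tree of $(V,\sim)$, let $M_1,\ldots,M_n$ be the children of $Q$ in this tree, and let $U \subseteq Q$ be a set containing exactly one vertex from each $M_i$, $i \in \{1,\ldots,n\}$. Then the graph $(U,\sim)$, which is prime, has exactly two conformal models up to equivalence, and one of them is the reflection of the other.
   Context: Graph and side data. $(V,\sim)$ is a finite simple graph; we write $u \parallel v$ when $u \neq v$ and $u,v$ are non-adjacent, and for sets $X \sim Y$ (resp. $X \parallel Y$) means $x\sim y$ (resp. $x \parallel y$) for all $x\in X$, $y \in Y$. For every $u \in V$ we are given a partition of $\{v \in V : v \parallel u\}$ into two sets $\mathrm{left}(u)$ and $\mathrm{right}(u)$. (In the paper, $(V,\sim)$ is the overlap graph $G_{ov}$ of a circular-arc graph $G$ and these sets come from the arc model; the statement uses only the data above and the existence of a conformal model of $(V,\sim)$.) Conformal models. For $U \subseteq V$, a conformal model of $(U,\sim)$ is a circular word $\phi$ (a word considered up to cyclic rotation; two such words are equivalent if one is a rotation of the other) in which each of the letters $u^0,u^1$, $u \in U$, occurs exactly once, such that: (i) for distinct $u,v \in U$, the chords $\phi(u)$ (joining $u^0,u^1$) and $\phi(v)$ cross, i.e. the letters of $u$ and $v$ alternate in $\phi$, if and only if $u \sim v$; (ii) for $u,v \in U$ with $u \parallel v$, both letters of $v$ lie on the left side of $\phi(u)$ (i.e. among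 the letters met when reading $\phi$ cyclically forward from $u^0$ to $u^1$) if $v \in \mathrm{left}(u)$, and both lie on the right side of $\phi(u)$ (among the letters met reading forward from $u^1$ to $u^0$) if $v \in \mathrm{right}(u)$. The reflection of a circular word $\phi$ is obtained by reversing $\phi$ and exchanging $u^0$ and $u^1$ for every $u$. Modular decomposition. A module of a graph $(X,\sim)$ is a set $M \subseteq X$ such that every vertex of $X \setminus M$ is adjacent either to all or to none of the vertices of $M$; it is trivial if $|M| \le 1$ or $M = X$. A graph is prime if it has only trivial modules. A node $Q$ of the modular decomposition tree of $(V,\sim)$ is prime if its children $M_1,\ldots,M_n$ (the maximal strong modules properly contained in $Q$) are such that the quotient graph obtained from $(Q,\sim)$ by picking one vertex in each $M_i$ is prime. *)

(* Defs.v *)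
From mathcomp Require Import all_boot.
Set Implicit Arguments. Unset Strict Implicit. Unset Printing Implicit Defensive.

Section Defs.
Variable V : finType.

Definition is_module (adj : rel V) (X M : {set V}) : Prop :=
  M \subset X /\
  forall x, x \in X :\: M ->
    (forall m, m \in M -> adj x m) \/ (forall m, m \in M -> ~~ adj x m).

Definition prime_graph (adj : rel V) (X : {set V}) : Prop :=
  3 <= #|X| /\
  forall M, is_module adj X M -> #|M| <= 1 \/ M = X.

Definition strong_module (adj : rel V) (M : {set V}) : Prop :=
  M != set0 /\ is_module adj [set: V] M /\
  forall M', is_module adj [set: V] M' ->
    M' :&: M = set0 \/ M' \subset M \/ M \subset M'.

Definition child (adj : rel V) (Q M : {set V}) : Prop :=
  strong_module adj M /\ M \proper Q /\
  ~ (exists M', strong_module adj M' /\ M \proper M' /\ M' \proper Q).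

Definition child_transversal (adj : rel V) (Q U : {set V}) : Prop :=
  U \subset Q /\ forall M, child adj Q M -> #|U :&: M| = 1.

Definition prime_node (adj : rel V) (Q : {set V}) : Prop :=
  strong_module adj Q /\
  exists U, child_transversal adj Q U /\ prime_graph adj U.

(* Letters u^0 = (u,false), u^1 = (u,true). A circular word is a seq of
   letters, considered up to rotation. *)
Definition letters (U : {set V}) : seq (V * bool) :=
  [seq (u, b) | u <- enum U, b <- [:: false; true]].

Definition from0 (w : seq (V * bool)) (u : V) : seq (V * bool) :=
  rot (index (u, false) w) w.

Definition on_left (w : seq (V * bool)) (u : V) (x : V * bool) : bool :=
  let s := from0 w u in (0 < index x s) && (index x s < index (u, true) s).

Definition on_right (w : seq (V * bool)) (u : V) (x : V * bool) : bool :=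
  let s := from0 w u in (index (u, true) s < index x s) && (index x s < size s).

Definition crosses (w : seq (V * bool)) (u v : V) : bool :=
  on_left w u (v, false) != on_left w u (v, true).

(* side u v = true  iff  v \in left(u)   (meaningful when u || v);
   side u v = false iff  v \in right(u). *)
Definition conformal_model (adj : rel V) (side : V -> V -> bool)
  (U : {set V}) (w : seq (V * bool)) : Prop :=
  perm_eq w (letters U) /\
  (forall u v, u \in U -> v \in U -> u != v -> crosses w u v = adj u v) /\
  (forall u v, u \in U -> v \in U -> u != v -> ~~ adj u v ->
     if side u v then on_left w u (v, false) && on_left w u (v, true)
     else on_right w u (v, false) && on_right w u (v, true)).

Definition circ_equiv (w1 w2 : seq (V * bool)) : Prop :=
  exists k, w2 = rot k w1.

Definition reflection (w : seq (V * bool)) : seq (V * bool) :=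
  rev [seq (x.1, ~~ x.2) | x <- w].

End Defs.

(* Main.v *)
Require Import Defs.
From Stdlib Require Import ClassicalEpsilon.
From mathcomp Require Import all_boot zify.
Set Implicit Arguments. Unset Strict Implicit. Unset Printing Implicit Defensive.

Definition cb (i j k : nat) : bool :=
  ((i < j) && (j < k)) || ((j < k) && (k < i)) || ((k < i) && (i < j)).

Lemma cb_rot i j k : cb i j k = cb j k i.
Proof. rewrite /cb; lia. Qed.

Lemma cb_swap i j k : i != j -> j != k -> i != k -> cb i k j = ~~ cb i j k.
Proof. rewrite /cb; lia. Qed.

Lemma index_rot (T : eqType) (w : seq T) y i : uniq w -> y \in w -> i < size w ->
  index y (rot i w) = if i <= index y w then index y w - i else size w - i + index y w.
Proof.
move=> uw yw ilt.
have E := cat_take_drop i w.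
have st : size (take i w) = i by rewrite size_take ilt.
have uw' := uw; rewrite -E cat_uniq in uw'; case/and3P: uw' => _ hd _.
have Iw : index y w = index y (take i w ++ drop i w) by rewrite E.
rewrite index_cat in Iw; rewrite /rot Iw.
have [yt|ynt] := boolP (y \in take i w).
  have yd : y \notin drop i w.
    by apply/negP => yd; move/hasPn: hd => /(_ y yd); rewrite yt.
  rewrite index_cat (negbTE yd) size_drop.
  have := index_mem y (take i w); rewrite yt st => lt.
  by rewrite leqNgt lt /=.
have yd : y \in drop i w.
  by move: yw; rewrite -{1}E mem_cat (negbTE ynt).
by rewrite index_cat yd st leq_addr addKn.
Qed.

Lemma index_neq (T : eqType) (w : seq T) x y : x \in w -> x != y -> index x w != index y w.
Proof.
move=> xw; apply: contra => /eqP E.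
have yw : y \in w by rewrite -index_mem -E index_mem.
by rewrite (index_inj x xw yw E) eqxx.
Qed.

Lemma OL_cb (V : finType) (w : seq (V * bool)) u y : uniq w ->
  (u, false) \in w -> (u, true) \in w -> y \in w -> y != (u, false) -> y != (u, true) ->
  on_left w u y = cb (index (u, false) w) (index y w) (index (u, true) w).
Proof.
move=> uw h0 h1 hy n0 n1.
have l0 := h0; rewrite -index_mem in l0.
have l1 := h1; rewrite -index_mem in l1.
have ly := hy; rewrite -index_mem in ly.
have d1 := index_neq hy n0. have d2 := index_neq hy n1.
have d3 : index (u, false) w != index (u, true) w by apply: index_neq => //; rewrite xpair_eqE andbF.
rewrite /on_left /from0 /= !index_rot //.
move: l0 l1 ly d1 d2 d3.
set a := index (u, false) w; set b := index y w; set c := index (u, true) w.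
move=> l0 l1 ly d1 d2 d3.
rewrite /cb; case: (leqP a b) => h; case: (leqP a c) => h'; lia.
Qed.

Lemma OR_cb (V : finType) (w : seq (V * bool)) u y : uniq w ->
  (u, false) \in w -> (u, true) \in w -> y \in w -> y != (u, false) -> y != (u, true) ->
  on_right w u y = ~~ on_left w u y.
Proof.
move=> uw h0 h1 hy n0 n1; rewrite OL_cb //.
have l0 := h0; rewrite -index_mem in l0.
have l1 := h1; rewrite -index_mem in l1.
have ly := hy; rewrite -index_mem in ly.
have d1 := index_neq hy n0. have d2 := index_neq hy n1.
have d3 : index (u, false) w != index (u, true) w by apply: index_neq => //; rewrite xpair_eqE andbF.
rewrite /on_right /from0 /= index_mem mem_rot hy andbT !index_rot //.
move: l0 l1 ly d1 d2 d3.
set a := index (u, false) w; set b := index y w; set c := index (u, true) w.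
move=> l0 l1 ly d1 d2 d3.
clearbody a b c; rewrite /cb; case: (leqP a b) => h; case: (leqP a c) => h'; lia.
Qed.

Lemma cb_shift N k a b c : a < N -> b < N -> c < N -> k < N ->
  cb (if k <= a then a - k else N - k + a) (if k <= b then b - k else N - k + b)
     (if k <= c then c - k else N - k + c) = cb a b c.
Proof.
move=> *; rewrite /cb; case: (leqP k a) => ?; case: (leqP k b) => ?; case: (leqP k c) => ?; lia.
Qed.

Lemma cb_rev M a b c : a <= M -> b <= M -> c <= M -> cb (M - a) (M - b) (M - c) = cb c b a.
Proof. move=> *; rewrite /cb; lia. Qed.

Lemma OL_rot (V : finType) (w : seq (V * bool)) k u y : uniq w ->
  (u, false) \in w -> (u, true) \in w -> y \in w -> y != (u, false) -> y != (u, true) ->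
  on_left (rot k w) u y = on_left w u y.
Proof.
move=> uw h0 h1 hy n0 n1.
case: (ltnP k (size w)) => hk; last by rewrite rot_oversize.
rewrite !OL_cb ?rot_uniq ?mem_rot // !index_rot //.
by apply: cb_shift => //; rewrite index_mem.
Qed.

Lemma index_rev (T : eqType) (s : seq T) x : uniq s -> x \in s ->
  index x (rev s) = (size s).-1 - index x s.
Proof.
move=> us xs.
have lt := xs; rewrite -index_mem in lt.
have ln : (size s).-1 - index x s < size (rev s) by rewrite size_rev; lia.
rewrite -{1}(index_uniq x ln) ?rev_uniq //.
rewrite nth_rev; last by rewrite size_rev in ln.
have -> : size s - ((size s).-1 - index x s).+1 = index x s by lia.
by rewrite nth_index.
Qed.

Definition flip (V : Type) (y : V * bool) : V * bool := (y.1, ~~ y.2).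

Lemma flipK (V : Type) : involutive (@flip V).
Proof. by case=> a b; rewrite /flip /= negbK. Qed.

Lemma reflectionE (V : finType) (w : seq (V * bool)) :
  reflection w = rev (map (@flip V) w).
Proof. by []. Qed.

Lemma index_refl (V : finType) (w : seq (V * bool)) a : uniq w -> flip a \in w ->
  index a (reflection w) = (size w).-1 - index (flip a) w.
Proof.
move=> uw fa; rewrite reflectionE index_rev ?map_inj_uniq //; last 2 first.
- exact: (can_inj (@flipK V)).
- by rewrite -(flipK a) mem_map //; exact: (can_inj (@flipK V)).
by rewrite size_map -{1}(flipK a) index_map //; exact: (can_inj (@flipK V)).
Qed.

Lemma mem_refl (V : finType) (w : seq (V * bool)) a : (a \in reflection w) = (flip a \in w).
Proof.
by rewrite reflectionE mem_rev -{1}(flipK a) mem_map //; exact: (can_inj (@flipK V)).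
Qed.

Lemma uniq_refl (V : finType) (w : seq (V * bool)) : uniq (reflection w) = uniq w.
Proof. by rewrite reflectionE rev_uniq map_inj_uniq //; exact: (can_inj (@flipK V)). Qed.

Lemma OL_refl (V : finType) (w : seq (V * bool)) u y : uniq w ->
  (u, false) \in w -> (u, true) \in w -> flip y \in w -> y.1 != u ->
  on_left (reflection w) u y = on_left w u (flip y).
Proof.
move=> uw h0 h1 hy n.
have ne : forall b, y != (u, b) by move=> b; apply: contra n => /eqP ->.
have ne' : forall b, flip y != (u, b) by move=> b; apply: contra n => /eqP; case: y {ne hy} => a c [->].
rewrite !OL_cb ?uniq_refl ?mem_refl //.
rewrite !index_refl //.
have -> : flip (u, false) = (u, true) by [].
have -> : flip (u, true) = (u, false) by [].
have l0 := h0; rewrite -index_mem in l0.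
have l1 := h1; rewrite -index_mem in l1.
have ly := hy; rewrite -index_mem in ly.
rewrite cb_rev //; by rewrite -ltnS prednK // (leq_ltn_trans (leq0n _) l0).
Qed.

Lemma index_filter_lt (T : eqType) (p : pred T) s y z : p y -> p z ->
  (index y (filter p s) < index z (filter p s)) = (index y s < index z s).
Proof.
move=> py pz; elim: s => [|a s IH] //=.
case pa: (p a) => /=.
  by case: (a == y); case: (a == z).
have ay : a != y by apply: contraFneq pa => ->.
have az : a != z by apply: contraFneq pa => ->.
by rewrite (negbTE ay) (negbTE az) ltnS.
Qed.

Lemma OL_filter (V : finType) (p : pred (V * bool)) (w : seq (V * bool)) u y : uniq w ->
  (u, false) \in w -> (u, true) \in w -> y \in w -> y != (u, false) -> y != (u, true) ->
  p (u, false) -> p (u, true) -> p y ->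
  on_left (filter p w) u y = on_left w u y.
Proof.
move=> uw h0 h1 hy n0 n1 p0 p1 py.
rewrite !OL_cb ?filter_uniq ?mem_filter ?p0 ?p1 ?py //.
by rewrite /cb !index_filter_lt.
Qed.

Lemma mem_letters (V : finType) (U : {set V}) y : (y \in letters U) = (y.1 \in U).
Proof.
case: y => a b /=; apply/allpairsP/idP => [[[x c] /= [xe _ [-> _]]]|ha].
  by rewrite mem_enum in xe.
by exists (a, b); split => //=; [rewrite mem_enum | case: b].
Qed.

Lemma uniq_letters (V : finType) (U : {set V}) : uniq (letters U).
Proof.
apply: allpairs_uniq => //; first exact: enum_uniq.
by case=> [a b] [c d] _ _ /= [-> ->].
Qed.

Definition conf (V : finType) (adj : rel V) (side : V -> V -> bool) (U : {set V})
  (w : seq (V * bool)) : Prop :=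
  [/\ uniq w, (forall y, (y \in w) = (y.1 \in U)),
      (forall u v, u \in U -> v \in U -> u != v -> crosses w u v = adj u v) &
      (forall u v, u \in U -> v \in U -> u != v -> ~~ adj u v ->
         on_left w u (v, false) = side u v /\ on_left w u (v, true) = side u v)].

Lemma neq_letter (V : eqType) (u v : V) (b c : bool) : u != v -> (v, b) != (u, c).
Proof. by move=> uv; apply: contra uv => /eqP [->]. Qed.

Lemma conformalP (V : finType) (adj : rel V) side U w :
  conformal_model adj side U w <-> conf adj side U w.
Proof.
split.
  case=> hp [hc hs].
  have uw : uniq w by rewrite (perm_uniq hp) uniq_letters.
  have mw : forall y, (y \in w) = (y.1 \in U) by move=> y; rewrite (perm_mem hp) mem_letters.
  split => // u v uU vU uv nadj.
  have := hs u v uU vU uv nadj.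
  have L : forall b c, (b, c).1 \in U -> (b, c) \in w by move=> b c; rewrite mw.
  rewrite !OR_cb ?L ?neq_letter //.
  by case: (side u v) => /andP [a1 b1]; split; by [apply: a1 | apply: b1 | apply/negbTE].
case=> uw mw hc hs.
split; first by apply: uniq_perm => //; [exact: uniq_letters | move=> y; rewrite mw mem_letters].
split => // u v uU vU uv nadj.
have L : forall b c, (b, c).1 \in U -> (b, c) \in w by move=> b c; rewrite mw.
rewrite !OR_cb ?L ?neq_letter //.
by case: (hs u v uU vU uv nadj) => -> ->; case: (side u v).
Qed.
Lemma F1_nat u0 u1 v0 v1 : u0 != u1 -> u0 != v0 -> u0 != v1 -> u1 != v0 -> u1 != v1 -> v0 != v1 ->
  cb u0 v0 u1 != cb u0 v1 u1 -> cb v0 u0 v1 = ~~ cb u0 v0 u1.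
Proof. rewrite /cb /=. lia. Qed.

Lemma cb0 e m : 0 < e -> cb 0 e m = (e < m).
Proof. rewrite /cb; lia. Qed.

Lemma F2a av cv ax cx m : av < m -> ax < m -> m < cv -> m < cx -> av != ax -> cv != cx ->
  cb av ax cv = cb av cx cv -> (cb av ax cv != cb ax av cx).
Proof. rewrite /cb. lia. Qed.
Lemma F2b av cv ax cx m : av < m -> ax < m -> m < cv -> m < cx -> av != ax -> cv != cx ->
  cb av cx cv = cb av ax cv -> (cb av cx cv == cb cx av ax).
Proof. rewrite /cb. lia. Qed.
Lemma F2c av cv ax cx m : av < m -> ax < m -> m < cv -> m < cx -> av != ax -> cv != cx ->
  cb cv ax av = cb cv cx av -> (cb cv ax av == cb ax cv cx).
Proof. rewrite /cb. lia. Qed.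
Lemma F2d av cv ax cx m : av < m -> ax < m -> m < cv -> m < cx -> av != ax -> cv != cx ->
  cb cv cx av = cb cv ax av -> (cb cv cx av != cb cx cv ax).
Proof. rewrite /cb. lia. Qed.

Lemma F2core m v0 v1 x0 x1 : 0 < m -> 0 < v0 -> 0 < v1 -> 0 < x0 -> 0 < x1 ->
  m != v0 -> m != v1 -> m != x0 -> m != x1 -> v0 != x0 -> v0 != x1 -> v1 != x0 -> v1 != x1 ->
  cb 0 v0 m != cb 0 v1 m -> cb 0 x0 m != cb 0 x1 m -> cb v0 x0 v1 = cb v0 x1 v1 ->
  cb 0 v0 m (+) cb 0 x0 m = (cb v0 x0 v1 == cb x0 v0 x1).
Proof.
move=> ? ? ? ? ? ? ? ? ? ? ? ? ?; rewrite !cb0 //.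
case: (ltnP v0 m) => h1; case: (ltnP v1 m) => h2 //= _;
case: (ltnP x0 m) => h3; case: (ltnP x1 m) => h4 //= _ h.
- by apply/esym/negbTE; apply: (@F2a v0 v1 x0 x1 m) => //; lia.
- by apply/esym; apply: (@F2b v0 v1 x1 x0 m) => //; lia.
- by apply/esym; apply: (@F2c v1 v0 x0 x1 m) => //; lia.
- by apply/esym/negbTE; apply: (@F2d v1 v0 x1 x0 m) => //; lia.
Qed.
Lemma AR1 j p : p != j -> p != j.+1 -> cb j j.+1 p.
Proof. rewrite /cb; lia. Qed.
Lemma AR2 j p : cb p j.+1 j = false.
Proof. rewrite /cb; lia. Qed.
Lemma AR3 j p : cb j.+1 j p = false.
Proof. rewrite /cb; lia. Qed.
Lemma AR4 j p : p != j -> p != j.+1 -> cb p j j.+1.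
Proof. rewrite /cb; lia. Qed.
Lemma AR5 j x y : x != j -> x != j.+1 -> y != j -> y != j.+1 -> cb x j y = cb x j.+1 y.
Proof. rewrite /cb; lia. Qed.
Lemma AR6 j q x y : x != y -> x != j -> x != q -> y != j -> y != q -> j != q ->
  cb x j y = cb x q y -> cb j x q = cb j y q.
Proof. rewrite /cb; lia. Qed.
Lemma cb_ii i k : cb i i k = false.
Proof. rewrite /cb; lia. Qed.
Lemma cb_kk i k : cb i k k = false.
Proof. rewrite /cb; lia. Qed.
Lemma nocross_nat a z c0 c1 d0 d1 : c0 != d0 -> c0 != d1 -> c1 != d0 -> c1 != d1 ->
  cb a c0 z -> cb a c1 z -> ~~ cb a d0 z -> ~~ cb a d1 z -> cb c0 d0 c1 = cb c0 d1 c1.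
Proof. rewrite /cb; lia. Qed.


Lemma conf_mem (V : finType) adj side (U : {set V}) w u b :
  conf adj side U w -> u \in U -> (u, b) \in w.
Proof. by case=> _ mw _ _ uU; rewrite mw. Qed.

Lemma conf_cross (V : finType) adj side (U : {set V}) w u v :
  conf adj side U w -> u \in U -> v \in U -> u != v ->
  (on_left w u (v, true) = (on_left w u (v, false) (+) adj u v)).
Proof.
case=> _ _ hc _ uU vU uv; rewrite -(hc u v uU vU uv) /crosses.
by case: (on_left w u (v, true)); case: (on_left w u (v, false)).
Qed.

Lemma F1w (V : finType) adj side (U : {set V}) w u v :
  conf adj side U w -> u \in U -> v \in U -> u != v -> adj u v ->
  on_left w v (u, false) = ~~ on_left w u (v, false).
Proof.
move=> C uU vU uv a.
have hc := conf_cross C uU vU uv; rewrite a in hc.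
have uw : uniq w by case: C.
have M : forall z b, z \in U -> (z, b) \in w by move=> z b; case: C => _ mw _ _ zU; rewrite mw.
have vu : v != u by rewrite eq_sym.
move: hc; rewrite !OL_cb ?M ?neq_letter // => hc.
apply: F1_nat; last by rewrite hc; case: (cb _ _ _).
all: apply: index_neq; [by rewrite M | ]. all: try by rewrite neq_letter.
all: by apply/eqP; case.
Qed.

Lemma pair_neq (V : eqType) (a c : V) (b d : bool) : (a != c) || (b != d) -> (a, b) != (c, d).
Proof. by case/orP => h; apply/eqP => -[E1 E2]; move: h; rewrite ?E1 ?E2 eqxx. Qed.

Lemma F2w (V : finType) adj side (U : {set V}) w u v x :
  conf adj side U w -> u \in U -> v \in U -> x \in U -> u != v -> u != x -> v != x ->
  adj u v -> adj u x -> ~~ adj v x ->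
  on_left w u (v, false) (+) on_left w u (x, false) = (on_left w v (x, false) == on_left w x (v, false)).
Proof.
move=> C uU vU xU uv ux vx a1 a2 a3.
have uw : uniq w by case: C.
have M : forall z b, z \in U -> (z, b) \in w by move=> z b; case: C => _ mw _ _ zU; rewrite mw.
have cuv := conf_cross C uU vU uv; rewrite a1 in cuv.
have cux := conf_cross C uU xU ux; rewrite a2 in cux.
have cvx := conf_cross C vU xU vx; rewrite (negbTE a3) addbF in cvx.
set k := index (u, false) w.
have R : forall c y b, c \in U -> y \in U -> c != y -> on_left w c (y, b) = on_left (rot k w) c (y, b).
  by move=> c y b cU yU cy; rewrite OL_rot ?M ?neq_letter.
rewrite !R // in cuv cux cvx *; last by rewrite eq_sym.
have us : uniq (rot k w) by rewrite rot_uniq.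
have Ms : forall z b, z \in U -> (z, b) \in rot k w by move=> z b zU; rewrite mem_rot M.
have P : forall a b c d, a \in U -> (a, b) != (c, d) -> index (a, b) (rot k w) != index (c, d) (rot k w).
  by move=> a b c d aU ne; apply: index_neq => //; rewrite Ms.
have I0 : index (u, false) (rot k w) = 0.
  by rewrite index_rot ?M // ?leqnn ?subnn // index_mem M.
have vx' : x != v by rewrite eq_sym.
rewrite !OL_cb ?Ms ?neq_letter // in cuv cux cvx *.
rewrite I0 in cuv cux *.
have pos : forall a b, a \in U -> (a, b) != (u, false) -> 0 < index (a, b) (rot k w).
  by move=> a b aU ne; rewrite lt0n -I0 P.
have vu : v != u by rewrite eq_sym.
have xu : x != u by rewrite eq_sym.
apply: F2core => //.
all: try (by rewrite cuv; case: (cb _ _ _)); try (by rewrite cux; case: (cb _ _ _)).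
all: first [apply: pos | apply: P]; rewrite // pair_neq // ?uv ?ux ?vx ?vu ?xu ?vx' ?orbT //.
Qed.

Lemma conf_filter (V : finType) adj side (U : {set V}) w :
  conf adj side [set: V] w -> conf adj side U (filter (fun y => y.1 \in U) w).
Proof.
case=> uw mw hc hs.
have M : forall z b, (z, b) \in w by move=> z b; rewrite mw inE.
have R : forall c y b, c \in U -> y \in U -> c != y ->
    on_left (filter (fun y => y.1 \in U) w) c (y, b) = on_left w c (y, b).
  by move=> c y b cU yU cy; rewrite OL_filter ?M ?neq_letter.
split.
- exact: filter_uniq.
- by move=> y; rewrite mem_filter; case: y => a b; rewrite M andbT.
- by move=> u v uU vU uv; rewrite /crosses !R // -(hc u v) ?inE.
- by move=> u v uU vU uv na; rewrite !R //; apply: hs; rewrite ?inE.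
Qed.

Lemma conf_refl (V : finType) adj side (U : {set V}) w :
  conf adj side U w -> conf adj side U (reflection w).
Proof.
case=> uw mw hc hs.
have M : forall z b, z \in U -> (z, b) \in w by move=> z b zU; rewrite mw.
have R : forall c y b, c \in U -> y \in U -> c != y ->
    on_left (reflection w) c (y, b) = on_left w c (y, ~~ b).
  by move=> c y b cU yU cy; rewrite OL_refl ?M // eq_sym.
split.
- by rewrite uniq_refl.
- by move=> y; rewrite mem_refl mw.
- move=> u v uU vU uv; rewrite /crosses !R // -(hc u v uU vU uv) /crosses.
  by case: (on_left w u (v, true)); case: (on_left w u (v, false)).
- by move=> u v uU vU uv na; rewrite !R //=; case: (hs u v uU vU uv na) => -> ->.
Qed.

Lemma refl_bit (V : finType) adj side (U : {set V}) w u v :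
  conf adj side U w -> u \in U -> v \in U -> u != v -> adj u v ->
  on_left (reflection w) u (v, false) = ~~ on_left w u (v, false).
Proof.
move=> C uU vU uv a.
have uw : uniq w by case: C.
have M : forall z b, z \in U -> (z, b) \in w by move=> z b zU; case: C => _ mw _ _; rewrite mw.
rewrite OL_refl ?M // ?(eq_sym v) //= (conf_cross C uU vU uv) a.
by rewrite addbT.
Qed.


Lemma no_bad_triangle (V : finType) (adj : rel V) (U : {set V}) (P : V -> V -> bool) :
  symmetric adj -> irreflexive adj -> prime_graph adj U ->
  (forall y z, y \in U -> z \in U -> adj y z -> P y z = P z y) ->
  (forall y z z', y \in U -> z \in U -> z' \in U -> adj y z -> adj y z' -> z != z' ->
      ~~ adj z z' -> P y z = P y z') ->
  forall a b c, a \in U -> b \in U -> c \in U -> adj a b -> adj a c -> adj b c ->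
  P a b = P a c -> P b c = P a b.
Proof.
move=> asym airr [_ pr] Psym Gam a b c aU bU cU ab ac bc Pabc.
apply/eqP; apply/negP => /negP hne.
pose T := fun y z => [&& y \in U, z \in U, adj y z, adj a y, adj a z,
                        P a y != P y z & P a z != P y z].
have Tsym : forall y z, T y z -> T z y.
  move=> y z /and5P [yU zU yz ay /and3P [az h1 h2]].
  have zy : adj z y by rewrite asym.
  by rewrite /T zU yU zy az ay (Psym z y zU yU zy) h1 h2.
have key : forall x y z, x \in U -> T y z -> adj x y -> ~~ adj x z -> T y x.
  move=> x y z xU Tyz xy nxz.
  case: (eqVneq x z) => [-> //|xz].
  move: Tyz => /and5P [yU zU yz ay /and3P [az h1 h2]].
  have yx : adj y x by rewrite asym.
  have zx : z != x by rewrite eq_sym.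
  have nzx : ~~ adj z x by rewrite asym.
  have Pyx : P y z = P y x := Gam y z x yU zU xU yz yx zx nzx.
  have ax : adj a x.
    case nax': (adj a x) => //; have nax := negbT nax'.
    have ya : adj y a by rewrite asym.
    have xa : a != x by apply: contraNneq nxz => <-.
    have := Gam y a x yU aU xU ya yx xa nax.
    rewrite (Psym y a yU aU ya) -Pyx => E.
    by move: h1; rewrite E eqxx.
  have Pax : P a x = P a z := Gam a x z aU xU zU ax az xz nxz.
  by rewrite /T yU xU yx ay ax -Pyx Pax h1 h2.
have [K KE] : exists K : {set V}, forall z, (z \in K) = connect T b z.
  by exists [set z | connect T b z] => z; rewrite inE.
have TK : forall y z, T y z -> (y \in K) = (z \in K).
  move=> y z Tyz; rewrite !KE; apply/idP/idP => h.
    exact: connect_trans h (connect1 Tyz).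
  exact: connect_trans h (connect1 (Tsym _ _ Tyz)).
have KaU : forall z, z \in K -> adj a z && (z \in U).
  move=> z; rewrite KE => hz.
  have cl : closed T [pred t | adj a t && (t \in U)].
    move=> y t Tyt; move: (Tyt) => /and5P [yU tU _ ay /and3P [at1 _ _]].
    by rewrite !inE ay at1 yU tU.
  by have := closed_connect cl hz; rewrite !inE ab bU => <-.
have bK : b \in K by rewrite KE connect0.
have cK : c \in K.
  rewrite KE; apply: connect1.
  by rewrite /T bU cU bc ab ac -Pabc eq_sym hne.
have modK : is_module adj U K.
  split; first by apply/subsetP => z /KaU /andP [].
  move=> x; rewrite inE => /andP [xK xU].
  have E : forall m, m \in K -> adj x m = adj x b.
    pose pq := [pred t | (t \notin K) || (adj x t == adj x b)].
    have cl : closed T pq.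
      move=> y z Tyz; rewrite !inE (TK y z Tyz).
      case zK: (z \in K) => //=.
      have yK : y \in K by rewrite (TK y z Tyz).
      suff -> : adj x y = adj x z by [].
      case xy: (adj x y); case xz: (adj x z) => //.
        have := key x y z xU Tyz xy (negbT xz).
        by move/(TK y x); rewrite yK => /esym xK'; move: xK; rewrite xK'.
      have := key x z y xU (Tsym _ _ Tyz) xz (negbT xy).
      by move/(TK z x); rewrite zK => /esym xK'; move: xK; rewrite xK'.
    move=> m mK; have := closed_connect cl (x:=b) (y:=m); rewrite -KE => /(_ mK).
    by rewrite !inE bK eqxx /= mK /= => /esym /eqP.
  by case: (boolP (adj x b)) => hb; [left|right] => m mK; rewrite E.
have Kc : 2 <= #|K|.
  have bc' : b != c by apply: contraTneq bc => ->; rewrite airr.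
  have := subset_leq_card (_ : [set b; c] \subset K); rewrite cards2 bc'; apply.
  by apply/subsetP => z; rewrite !inE => /orP [] /eqP ->.
case: (pr K modK) => [|KU]; first by rewrite leqNgt Kc.
by move: (KaU a); rewrite KU aU airr => /(_ isT).
Qed.

Lemma gallai (V : finType) (adj : rel V) (U : {set V}) (P : V -> V -> bool) :
  symmetric adj -> irreflexive adj -> prime_graph adj U ->
  (forall y z, y \in U -> z \in U -> adj y z -> P y z = P z y) ->
  (forall y z z', y \in U -> z \in U -> z' \in U -> adj y z -> adj y z' -> z != z' ->
      ~~ adj z z' -> P y z = P y z') ->
  forall a b c d, a \in U -> b \in U -> c \in U -> d \in U -> adj a b -> adj c d ->
  P a b = P c d.
Proof.
move=> asym airr prU Psym Gam.
have NB := no_bad_triangle asym airr prU Psym Gam.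
have G2 : forall x y z, x \in U -> y \in U -> z \in U -> adj x y -> adj x z -> P x y = P x z.
  move=> x y z xU yU zU xy xz.
  case: (eqVneq y z) => [-> //|yz].
  case: (boolP (adj y z)) => [ayz|nyz]; last exact: Gam.
  have yx : adj y x by rewrite asym.
  have zx : adj z x by rewrite asym.
  have zy : adj z y by rewrite asym.
  have H1 := NB y x z yU xU zU yx ayz xz.
  rewrite (Psym y x yU xU yx) in H1.
  have H2 := NB z x y zU xU yU zx zy xy.
  rewrite (Psym z x zU xU zx) (Psym z y zU yU zy) in H2.
  have H1' : (P x y == P y z) ==> (P x z == P x y) by apply/implyP => /eqP/H1 ->.
  have H2' : (P x z == P y z) ==> (P x y == P x z) by apply/implyP => /eqP/H2 ->.
  by move: H1' H2'; case: (P x y); case: (P x z); case: (P y z).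
move=> a b c d aU bU cU dU ab cd.
pose E := fun y z => [&& y \in U, z \in U & adj y z].
have Esym : forall y z, E y z -> E z y by move=> y z /and3P [? ? ?]; rewrite /E andbCA asym; apply/and3P.
have [C CE] : exists C : {set V}, forall z, (z \in C) = connect E a z.
  by exists [set z | connect E a z] => z; rewrite inE.
have CU : forall z, z \in C -> z \in U.
  move=> z; rewrite CE => hz.
  have cl : closed E [pred t | t \in U].
    by move=> y t /and3P [yU tU _]; rewrite !inE yU tU.
  by have := closed_connect cl hz; rewrite !inE aU => <-.
have modC : is_module adj U C.
  split; first by apply/subsetP => z /CU.
  move=> x; rewrite inE => /andP [xC xU]; right => m mC; apply/negP => xm.
  move: xC; rewrite CE; apply/negP/negPn.
  by apply: connect_trans (_ : connect E a m) _; [rewrite -CE | apply: connect1; rewrite /E xU (CU m mC) asym].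
have aC : a \in C by rewrite CE connect0.
have bC : b \in C by rewrite CE; apply: connect1; rewrite /E aU bU ab.
have CeqU : C = U.
  case: (prU) => _ pr; case: (pr C modC) => // C1; exfalso.
  have ab' : a != b by apply: contraTneq ab => ->; rewrite airr.
  have sub : [set a; b] \subset C by apply/subsetP => z; rewrite !inE => /orP [] /eqP ->.
  have := subset_leq_card sub; rewrite cards2 ab' => h.
  by move: (leq_trans h C1).
pose q := [pred z | [forall t, (t \in U) ==> adj z t ==> (P z t == P a b)]].
have cl : closed E q.
  have step : forall y z, E y z -> y \in q -> z \in q.
    move=> y z /and3P [yU zU yz] /forallP hy; apply/forallP => t; apply/implyP => tU; apply/implyP => zt.
    have zy : adj z y by rewrite asym.
    rewrite (G2 z t y zU tU yU zt zy) -(Psym y z yU zU yz).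
    by have := hy z; rewrite zU yz.
  move=> y z Eyz; apply/idP/idP; [exact: step | exact: step _ _ (Esym _ _ Eyz)].
have qa : a \in q.
  by apply/forallP => t; apply/implyP => tU; apply/implyP => at1; rewrite (G2 a t b).
have : c \in q by rewrite -(closed_connect cl (_ : connect E a c)) // -CE CeqU.
by move/forallP => /(_ d); rewrite dU cd /= => /eqP ->.
Qed.


Definition cutconn (V : finType) (adj : rel V) (U : {set V}) : Prop :=
  forall S : {set V}, S \subset U -> S != set0 -> S != U ->
    exists c d, [/\ c \in S, d \in U, d \notin S & adj c d].

Lemma OL_cbU (V : finType) (U : {set V}) (w : seq (V * bool)) c y :
  uniq w -> (forall y, (y \in w) = (y.1 \in U)) -> c \in U -> y.1 \in U -> y.1 != c ->
  on_left w c y = cb (index (c, false) w) (index y w) (index (c, true) w).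
Proof.
move=> uw mw cU yU yc; rewrite OL_cb ?mw //.
- by case: y yU yc => a b /= _; apply: contra => /eqP [->].
- by case: y yU yc => a b /= _; apply: contra => /eqP [->].
Qed.

Lemma idx_neq (V : finType) (U : {set V}) (w : seq (V * bool)) y y' :
  (forall y, (y \in w) = (y.1 \in U)) -> y.1 \in U -> y != y' -> index y w != index y' w.
Proof. by move=> mw yU; apply: index_neq; rewrite mw. Qed.

Lemma bneq (V : eqType) (A : V) (b : bool) : (A, b) != (A, ~~ b).
Proof. by apply/eqP => -[]; case: b. Qed.

Lemma bneq' (V : eqType) (A : V) (b : bool) : (A, ~~ b) != (A, b).
Proof. by rewrite eq_sym bneq. Qed.

Lemma pneq (V : eqType) (A Z : V) (b c : bool) : A != Z -> (A, b) != (Z, c).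
Proof. by move=> AZ; apply: contra AZ => /eqP [->]. Qed.

Lemma letter2 (V : eqType) (A : V) (b c : bool) : c = b \/ c = ~~ b.
Proof. by case: b; case: c; auto. Qed.

Ltac lneq := first [ exact: bneq | exact: bneq' | exact: (bneq _ false) | exact: (bneq _ true)
  | apply: pneq; by [ | rewrite eq_sym] ].

Ltac dist pa pz pa' pz' Ns Ns' :=
  first [ done | by rewrite eq_sym
        | (rewrite -?pz -?pa; apply: Ns; [ done | lneq ])
        | (rewrite -?pz' -?pa'; apply: Ns'; [ done | lneq ])
        | (rewrite eq_sym -?pz -?pa; apply: Ns; [ done | lneq ])
        | (rewrite eq_sym -?pz' -?pa'; apply: Ns'; [ done | lneq ]) ].

Lemma succ_core (V : finType) (adj : rel V) (U : {set V}) (s s' : seq (V * bool)) x0 j :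
  uniq s -> uniq s' -> (forall y, (y \in s) = (y.1 \in U)) -> (forall y, (y \in s') = (y.1 \in U)) ->
  (forall c d, c \in U -> d \in U -> c != d -> crosses s' c d = adj c d) ->
  (forall c y, c \in U -> y.1 \in U -> y.1 != c -> on_left s c y = on_left s' c y) ->
  cutconn adj U -> j.+1 < size s -> size s = size s' ->
  nth x0 s j = nth x0 s' j -> nth x0 s j.+1 = nth x0 s' j.+1.
Proof.
move=> us us' ms ms' cr' D cc lt sz.
have ljs : j < size s by apply: ltnW.
have ljs' : j < size s' by rewrite -sz.
have ljs1' : j.+1 < size s' by rewrite -sz.
have pa := index_uniq x0 ljs us.
have pz := index_uniq x0 lt us.
have pa' := index_uniq x0 ljs' us'.
have pz' := index_uniq x0 ljs1' us'.
have as_ := mem_nth x0 ljs. have zs := mem_nth x0 lt.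
have zs'_ := mem_nth x0 ljs1'.
move: pa pz pa' pz' as_ zs zs'_.
move Ea: (nth x0 s j) => [A ba]; move Ez: (nth x0 s j.+1) => [Z bz].
move Ea': (nth x0 s' j) => a'; move Ez': (nth x0 s' j.+1) => [C bc].
move=> pa pz pa' pz' as_ zs zs'_ E; subst a'.
case: (eqVneq (Z, bz) (C, bc)) => // nzz; exfalso.
have AU : A \in U by rewrite ms in as_.
have ZU : Z \in U by rewrite ms in zs.
have CU : C \in U by rewrite ms' in zs'_.
have M : forall y, y.1 \in U -> y \in s by move=> y; rewrite ms.
have M' : forall y, y.1 \in U -> y \in s' by move=> y; rewrite ms'.
set q := index (Z, bz) s'.
have za : (Z, bz) != (A, ba) by apply/eqP => E'; move: pz; rewrite E' pa; lia.
rewrite -E in pa'.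
have qj : q != j by rewrite -pa'; apply: (idx_neq ms') => //.
have qj1 : q != j.+1 by rewrite -pz'; apply: (idx_neq ms') => //.
pose In e := cb j (index e s') q.
have OLs := fun c y => @OL_cbU V U s c y us ms.
have OLs' := fun c y => @OL_cbU V U s' c y us' ms'.
have Ns := fun y y' => @idx_neq V U s y y' ms.
have Ns' := fun y y' => @idx_neq V U s' y y' ms'.
have Ia : ~~ In (A, ~~ ba).
  apply/negP => I1.
  have ZA : Z != A.
    apply/eqP => ZA; subst Z.
    case: (letter2 A ba bz) => Eb; first by move: za; rewrite Eb eqxx.
    by move: I1; rewrite /In -Eb -/q cb_kk.
  have H := D A (Z, bz) AU ZU ZA; rewrite OLs // OLs' // in H.
  move: I1; rewrite /In -/q.
  destruct ba => /= I1.
    rewrite pa pz pa' AR2 cb_rot cb_rot in H.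
    by move: I1; rewrite -H.
  rewrite pa pz pa' AR1 in H; try by dist pa pz pa' pz' Ns Ns'.
  rewrite cb_swap in H; try by dist pa pz pa' pz' Ns Ns'.
  by move: H; rewrite I1.
have Iz : ~~ In (Z, ~~ bz).
  apply/negP => I2.
  have AZ : A != Z.
    apply/eqP => AZ; subst Z.
    case: (letter2 A ba bz) => Eb; first by move: za; rewrite Eb eqxx.
    by move: I2; rewrite /In Eb negbK pa' cb_ii.
  have H := D Z (A, ba) ZU AU AZ; rewrite OLs // OLs' // in H.
  move: I2; rewrite /In -/q.
  destruct bz => /= I2.
    rewrite pz pa pa' AR4 in H; try by dist pa pz pa' pz' Ns Ns'.
    rewrite cb_rot in H; rewrite cb_swap in H; try by dist pa pz pa' pz' Ns Ns'.
    by move: H; rewrite I2.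
  rewrite pz pa pa' AR3 cb_rot in H.
  by move: I2; rewrite -H.
have Ic : forall c, c \in U -> c != A -> c != Z -> In (c, false) = In (c, true).
  move=> c cU cA cZ.
  have Ac : A != c by rewrite eq_sym.
  have Zc : Z != c by rewrite eq_sym.
  have H1 := D c (A, ba) cU AU Ac; have H2 := D c (Z, bz) cU ZU Zc.
  rewrite OLs // OLs' // pa pa' in H1; rewrite OLs // OLs' // pz in H2.
  rewrite /In; apply: AR6; try by dist pa pz pa' pz' Ns Ns'.
  rewrite -H1 -H2; apply: AR5; by dist pa pz pa' pz' Ns Ns'.
have Inz' : In (C, bc) by rewrite /In pz' AR1.
have CA : C != A.
  apply/eqP => CA; subst C.
  case: (letter2 A ba bc) => Eb; first by move: pz'; rewrite Eb pa' => /eqP; rewrite eqn_leq ltnn andbF.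
  by move: Ia; rewrite -Eb Inz'.
have CZ : C != Z.
  apply/eqP => CZ; subst C.
  case: (letter2 Z bz bc) => Eb; first by move: nzz; rewrite Eb eqxx.
  by move: Iz; rewrite -Eb Inz'.
pose S := [set c in U | In (c, false)].
have CS : C \in S.
  rewrite inE CU /=; destruct bc => //; by rewrite Ic.
have AS : A \notin S.
  rewrite inE AU /=; destruct ba => //.
  by rewrite /In pa' cb_ii.
have SU : S \subset U by apply/subsetP => x; rewrite inE => /andP [].
have S0 : S != set0 by apply/set0Pn; exists C.
have SnU : S != U by apply/eqP => SU'; move: AS; rewrite SU' AU.
case: (cc S SU S0 SnU) => c [d [cS dU dS cd]].
have cA : c != A by apply: contraNneq AS => <-.
move: (cS); rewrite inE => /andP [cU Ic0].
have cZ : c != Z.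
  apply/eqP => cZ; subst c; move: Ic0.
  destruct bz => //=; first by move/negbTE: Iz => ->.
  by rewrite /In -/q cb_kk.
have Ic1 : In (c, true) by rewrite -Ic.
have dn : forall b, ~~ In (d, b).
  move=> b; case: (eqVneq d A) => [->|dA].
    by case: (letter2 A ba b) => ->; [rewrite /In pa' cb_ii | exact: Ia].
  case: (eqVneq d Z) => [->|dZ].
    by case: (letter2 Z bz b) => ->; [rewrite /In -/q cb_kk | exact: Iz].
  have : ~~ In (d, false) by move: dS; rewrite inE dU.
  by destruct b => //; rewrite -Ic.
have cd' : c != d by apply: contraNneq dS => <-.
have dc : d != c by rewrite eq_sym.
have := cr' c d cU dU cd'; rewrite cd /crosses OLs' // OLs' //.
have Hn := dn false; have Ht := dn true.
rewrite (nocross_nat (a:=j) (z:=q) (c0:=index (c,false) s') (c1:=index (c,true) s') (d0 := index (d,false) s') (d1:= index (d,true) s')) ?eqxx //; by dist pa pz pa' pz' Ns Ns'.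
Qed.

Lemma determ (V : finType) adj side (U : {set V}) w w' u :
  conf adj side U w -> conf adj side U w' -> cutconn adj U -> u \in U ->
  (forall c d b, c \in U -> d \in U -> c != d -> on_left w c (d, b) = on_left w' c (d, b)) ->
  exists k, w' = rot k w.
Proof.
move=> C C' cc uU Dw.
case: (C) => uw mw hc _; case: (C') => uw' mw' hc' _.
set i := index (u, false) w; set i' := index (u, false) w'.
set s := rot i w; set s' := rot i' w'.
have us : uniq s by rewrite rot_uniq.
have us' : uniq s' by rewrite rot_uniq.
have ms : forall y, (y \in s) = (y.1 \in U) by move=> y; rewrite mem_rot mw.
have ms' : forall y, (y \in s') = (y.1 \in U) by move=> y; rewrite mem_rot mw'.
have OR : forall (x : seq (V * bool)) k c y, uniq x -> (forall y, (y \in x) = (y.1 \in U)) ->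
    c \in U -> y.1 \in U -> y.1 != c -> on_left (rot k x) c y = on_left x c y.
  move=> x k c y ux mx cU yU yc; rewrite OL_rot ?mx //.
  - by case: y yU yc => a b /= _; apply: contra => /eqP [->].
  - by case: y yU yc => a b /= _; apply: contra => /eqP [->].
have cr' : forall c d, c \in U -> d \in U -> c != d -> crosses s' c d = adj c d.
  by move=> c d cU dU cd; rewrite /crosses !OR // ?(eq_sym d) // -(hc' c d cU dU cd).
have D : forall c y, c \in U -> y.1 \in U -> y.1 != c -> on_left s c y = on_left s' c y.
  move=> c [d b] cU /= dU dc; rewrite !OR //; apply: Dw => //; by rewrite eq_sym.
have sz : size s = size s'.
  rewrite !size_rot; apply: perm_size; apply: uniq_perm => // y; by rewrite mw mw'.
have h0 : nth (u, false) s 0 = nth (u, false) s' 0.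
  by rewrite /s /s' /i /i' !rot_index ?mw ?mw'.
have all_j : forall j, j < size s -> nth (u, false) s j = nth (u, false) s' j.
  elim=> [//|j IH] lt.
  apply: (succ_core (adj := adj) (U := U)) => //.
  by apply: IH; apply: ltnW.
have ss : s = s' by apply: (eq_from_nth (x0 := (u, false))) => // j /all_j.
exists (rot_add w i (size s' - i')).
rewrite -rot_rot_add -/s ss /s'.
by rewrite -{1}(rotK i' w') /rotr size_rot.
Qed.


Definition asb (P : Prop) : bool := if excluded_middle_informative P then true else false.

Lemma asbP (P : Prop) : reflect P (asb P).
Proof. by rewrite /asb; case: excluded_middle_informative => h; constructor. Qed.

Lemma singleton_strong (V : finType) (adj : rel V) x : strong_module adj [set x].
Proof.
split; first by apply/set0Pn; exists x; rewrite inE.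
split.
  split; first exact: subsetT.
  move=> y _; case: (boolP (adj y x)) => h; [left|right] => m; rewrite inE => /eqP ->//.
move=> M' _; case: (boolP (x \in M')) => h.
  by right; right; apply/subsetP => z; rewrite in_set1 => /eqP ->.
left; apply/setP => z; rewrite !inE; apply/andP => -[zM /eqP E]; by move: h; rewrite -E zM.
Qed.

Lemma children_eq (V : finType) (adj : rel V) Q M1 M2 x :
  child adj Q M1 -> child adj Q M2 -> x \in M1 -> x \in M2 -> M1 = M2.
Proof.
move=> [s1 [p1 m1]] [s2 [p2 m2]] x1 x2.
have [_ [mod1 _]] := s1; have [_ [mod2 _]] := s2.
have [_ [_ o2]] := s2; have [_ [_ o1]] := s1.
case: (o2 M1 mod1) => [E|[S12|S21]].
- have : x \in M1 :&: M2 by rewrite inE x1 x2.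
  by rewrite E inE.
- case: (eqVneq M1 M2) => // ne; exfalso; apply: m1; exists M2; split => //.
  by rewrite properEneq ne S12.
- case: (eqVneq M2 M1) => [//|ne]; exfalso; apply: m2; exists M1; split => //.
  by rewrite properEneq ne S21.
Qed.

Lemma in_some_child (V : finType) (adj : rel V) (Q : {set V}) x :
  x \in Q -> 2 <= #|Q| -> exists M, child adj Q M /\ x \in M.
Proof.
move=> xQ Q2.
suff H : forall n (M : {set V}), #|Q| - #|M| <= n -> strong_module adj M -> x \in M -> M \proper Q ->
    exists M, child adj Q M /\ x \in M.
  apply: (H #|Q| [set x]) => //; first exact: leq_subr.
  - exact: singleton_strong.
  - by rewrite inE.
  rewrite properEcard cards1 Q2 andbT; apply/subsetP => z; rewrite inE => /eqP ->.
  done.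
elim=> [|n IH] M le sM xM pM.
  by move: (proper_card pM) le; rewrite leqn0 subn_eq0 => lt /(leq_trans lt); rewrite ltnn.
case: (classic (exists M', strong_module adj M' /\ M \proper M' /\ M' \proper Q)).
  move=> [M' [sM' [pMM' pM'Q]]].
  apply: (IH M') => //; last by apply: (subsetP (proper_sub pMM')).
  have := proper_card pMM'; move: le; clear; lia.
by move=> nex; exists M; split.
Qed.

Lemma mod_eq (V : finType) (adj : rel V) (X M : {set V}) t m1 m2 :
  is_module adj X M -> t \in X -> t \notin M -> m1 \in M -> m2 \in M -> adj t m1 = adj t m2.
Proof.
move=> [_ h] tX tM h1 h2.
have : t \in X :\: M by rewrite inE tM tX.
by case/h => H; rewrite ?H // (negbTE (H _ h1)) (negbTE (H _ h2)).
Qed.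

Lemma card1_eq (V : finType) (A : {set V}) x y : #|A| = 1 -> x \in A -> y \in A -> x = y.
Proof. by move=> /eqP /cards1P [z ->]; rewrite !inE => /eqP -> /eqP ->. Qed.

Lemma transversal_prime (V : finType) (adj : rel V) (Q U U' : {set V}) :
  symmetric adj -> child_transversal adj Q U -> child_transversal adj Q U' ->
  prime_graph adj U' -> prime_graph adj U.
Proof.
move=> asym [UQ hU] [U'Q hU'] [U'3 prU'].
have Q2 : 2 <= #|Q| by apply: leq_trans (subset_leq_card U'Q); apply: leq_trans U'3.
pose R y z := exists M, child adj Q M /\ y \in M /\ z \in M.
have Rsym : forall y z, R y z -> R z y by move=> y z [M [cM [yM zM]]]; exists M.
have ex : forall (W : {set V}), (forall M, child adj Q M -> #|W :&: M| = 1) ->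
    forall y, y \in Q -> exists z, z \in W /\ R y z.
  move=> W hW y yQ; have [M [cM yM]] := in_some_child adj yQ Q2.
  have /eqP /cards1P [z Ez] := hW M cM.
  have : z \in W :&: M by rewrite Ez inE.
  by rewrite inE => /andP [zW zM]; exists z; split => //; exists M.
have un : forall (W : {set V}), (forall M, child adj Q M -> #|W :&: M| = 1) ->
    forall y z1 z2, R y z1 -> R y z2 -> z1 \in W -> z2 \in W -> z1 = z2.
  move=> W hW y z1 z2 [M1 [c1 [y1 z1M]]] [M2 [c2 [y2 z2M]]] z1W z2W.
  have E := children_eq c1 c2 y1 y2; subst M2.
  by apply: (card1_eq (hW M1 c1)); rewrite inE ?z1W ?z2W.
pose f y := odflt y [pick z in U | asb (R y z)].
pose g y := odflt y [pick z in U' | asb (R y z)].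
have fP : forall y, y \in Q -> f y \in U /\ R y (f y).
  move=> y yQ; rewrite /f; case: pickP => [z /andP [zU /asbP Ryz] | none] //=.
  have [z [zU Ryz]] := ex U hU y yQ.
  by move: (none z); rewrite zU /=; case: asbP.
have gP : forall y, y \in Q -> g y \in U' /\ R y (g y).
  move=> y yQ; rewrite /g; case: pickP => [z /andP [zU /asbP Ryz] | none] //=.
  have [z [zU Ryz]] := ex U' hU' y yQ.
  by move: (none z); rewrite zU /=; case: asbP.
have UQ' : forall y, y \in U -> y \in Q by move=> y; apply: (subsetP UQ).
have U'Q' : forall y, y \in U' -> y \in Q by move=> y; apply: (subsetP U'Q).
have gf : forall y, y \in U' -> g (f y) = y.
  move=> y yU'; have [fU Rf] := fP y (U'Q' y yU').
  have [gU Rg] := gP (f y) (UQ' _ fU).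
  exact: (un U' hU' (f y) _ _ Rg (Rsym _ _ Rf)).
have fg : forall y, y \in U -> f (g y) = y.
  move=> y yU; have [gU Rg] := gP y (UQ' y yU).
  have [fU Rf] := fP (g y) (U'Q' _ gU).
  exact: (un U hU (g y) _ _ Rf (Rsym _ _ Rg)).
have Radj : forall y1 y2 z1 z2, y1 \in U' -> y2 \in U' -> y1 != y2 -> R y1 z1 -> R y2 z2 ->
    adj y1 y2 = adj z1 z2.
  move=> y1 y2 z1 z2 y1U y2U ne [M1 [c1 [y1M z1M]]] [M2 [c2 [y2M z2M]]].
  have dis : forall t, t \in M1 -> t \in M2 -> False.
    move=> t t1 t2; have E := children_eq c1 c2 t1 t2; subst M2.
    by move: ne; rewrite (card1_eq (hU' M1 c1) (_ : y1 \in U' :&: M1) (_ : y2 \in U' :&: M1)) ?eqxx // inE ?y1U ?y2U.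
  have [[_ [m1 _]] _] := c1; have [[_ [m2 _]] _] := c2.
  have y2M1 : y2 \notin M1 by apply/negP => h; exact: dis h y2M.
  have z1M2 : z1 \notin M2 by apply/negP => h; exact: dis z1M h.
  rewrite asym (mod_eq m1 (in_setT y2) y2M1 y1M z1M) asym.
  exact: (mod_eq m2 (in_setT z1) z1M2 y2M z2M).
have fadj : forall y1 y2, y1 \in U' -> y2 \in U' -> y1 != y2 -> adj y1 y2 = adj (f y1) (f y2).
  move=> y1 y2 h1 h2 ne; apply: Radj => //; [exact: (fP y1 (U'Q' _ h1)).2 | exact: (fP y2 (U'Q' _ h2)).2].
have finj : {in U' &, injective f}.
  by move=> y1 y2 h1 h2 E; rewrite -(gf y1 h1) -(gf y2 h2) E.
have ginj : {in U &, injective g}.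
  by move=> y1 y2 h1 h2 E; rewrite -(fg y1 h1) -(fg y2 h2) E.
have fU'U : f @: U' = U.
  apply/setP => y; apply/imsetP/idP => [[x xU' ->]|yU]; first exact: (fP x (U'Q' _ xU')).1.
  by exists (g y); [exact: (gP y (UQ' _ yU)).1 | rewrite fg].
have cardU : #|U| = #|U'| by rewrite -fU'U card_in_imset.
split; first by rewrite cardU.
move=> X [XU Xm].
pose Y := g @: X.
have XU' : forall x, x \in X -> x \in U by move=> x; apply: (subsetP XU).
have YU' : Y \subset U'.
  by apply/subsetP => y /imsetP [x xX ->]; exact: (gP x (UQ' _ (XU' _ xX))).1.
have cardY : #|Y| = #|X|.
  by rewrite card_in_imset // => x1 x2 h1 h2; apply: ginj; apply: XU'.
have modY : is_module adj U' Y.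
  split => // y; rewrite inE => /andP [yY yU'].
  have fyX : f y \notin X.
    by apply: contra yY => h; apply/imsetP; exists (f y) => //; rewrite gf.
  have fyU : f y \in U by exact: (fP y (U'Q' _ yU')).1.
  have : f y \in U :\: X by rewrite inE fyX fyU.
  have E : forall x, x \in X -> adj y (g x) = adj (f y) x.
    move=> x xX; have gxU' := (gP x (UQ' _ (XU' _ xX))).1.
    rewrite fadj // ?fg ?XU' //.
    by apply: contra yY => /eqP ->; apply/imsetP; exists x.
  case/Xm => H; [left|right] => m /imsetP [x xX ->]; rewrite E ?H //.
case: (prU' Y modY) => [Y1|YE]; first by left; rewrite -cardY.
right; apply/eqP; rewrite eqEsubset XU /=.
apply/subsetP => y yU.
have : g y \in Y by rewrite YE; exact: (gP y (UQ' _ yU)).1.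
by case/imsetP => x xX E; rewrite (ginj y x yU (XU' _ xX) E).
Qed.


Lemma two_elems (V : finType) (U : {set V}) : 2 <= #|U| -> exists a b, [/\ a \in U, b \in U & a != b].
Proof.
move=> U2.
have [a aU] : exists a, a \in U by apply/card_gt0P; apply: leq_trans U2.
have : 0 < #|U :\ a| by rewrite (cardsD1 a U) aU in U2.
case/card_gt0P => b; rewrite !inE => /andP [ba bU].
by exists a, b; split => //; rewrite eq_sym.
Qed.

Lemma prime_edge (V : finType) (adj : rel V) (U : {set V}) :
  symmetric adj -> prime_graph adj U -> exists u v, [/\ u \in U, v \in U & adj u v].
Proof.
move=> asym [U3 pr].
case: (boolP [exists u in U, exists v in U, adj u v]).
  by case/existsP => u /andP [uU /existsP [v /andP [vU uv]]]; exists u, v.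
move=> /existsPn no.
have [a [b [aU bU ab]]] := two_elems (ltnW U3).
have mod : is_module adj U [set a; b].
  split; first by apply/subsetP => z; rewrite !inE => /orP [] /eqP ->.
  move=> x; rewrite inE => /andP [_ xU]; right => m mab.
  have mU : m \in U by move: mab; rewrite !inE => /orP [] /eqP ->.
  by move: (no x); rewrite xU /= => /existsPn /(_ m); rewrite mU.
case: (pr _ mod); first by rewrite cards2 ab.
move=> E; move: U3; rewrite -E cards2 ab; done.
Qed.

Lemma prime_cutconn (V : finType) (adj : rel V) (U : {set V}) :
  symmetric adj -> prime_graph adj U -> cutconn adj U.
Proof.
move=> asym [U3 pr] S SU S0 SnU.
case: (boolP [exists c in S, exists d in U, (d \notin S) && adj c d]).
  by case/existsP => c /andP [cS /existsP [d /andP [dU /andP [dS cd]]]]; exists c, d.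
move=> /existsPn no.
have noe : forall c d, c \in S -> d \in U -> d \notin S -> ~~ adj c d.
  move=> c d cS dU dS; move: (no c); rewrite cS /= => /existsPn /(_ d).
  by rewrite dU dS.
have modS : is_module adj U S.
  split => // x; rewrite inE => /andP [xS xU]; right => m mS.
  by rewrite asym; apply: noe.
have modT : is_module adj U (U :\: S).
  split; first exact: subsetDl.
  move=> x; rewrite !inE negb_and negbK => /andP [/orP [xS|xU'] xU]; last by rewrite xU in xU'.
  right => m; rewrite inE => /andP [mS mU]; exact: noe.
have cU : #|S| + #|U :\: S| = #|U| by rewrite addnC cardsD (setIidPr SU) subnK // subset_leq_card.
have S1 : 0 < #|S| by rewrite card_gt0.
have T1 : 0 < #|U :\: S|.
  case: (set_0Vmem (U :\: S)) => [E|[x xT]]; last by apply/card_gt0P; exists x.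
  have US : U \subset S by rewrite -setD_eq0 E.
  by move: SnU; rewrite eqEsubset SU US.
case: (leqP 2 #|S|) => S2.
  case: (pr _ modS) => [|E]; [by rewrite leqNgt S2 | by rewrite E eqxx in SnU].
case: (pr _ modT) => [T2|E]; first by move: U3; rewrite -cU; lia.
by move: S1; rewrite E in cU; lia.
Qed.

Lemma data_eq (V : finType) adj side (U : {set V}) w w' :
  conf adj side U w -> conf adj side U w' ->
  (forall c d, c \in U -> d \in U -> c != d -> adj c d ->
     on_left w c (d, false) = on_left w' c (d, false)) ->
  forall c d b, c \in U -> d \in U -> c != d -> on_left w c (d, b) = on_left w' c (d, b).
Proof.
move=> C C' H c d b cU dU cd.
case: (boolP (adj c d)) => a.
  case: b; last exact: H.
  by rewrite (conf_cross C cU dU cd) (conf_cross C' cU dU cd) H.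
case: C => _ _ _ hs; case: C' => _ _ _ hs'.
have [h1 h2] := hs c d cU dU cd a; have [h1' h2'] := hs' c d cU dU cd a.
by case: b; rewrite ?h1 ?h2 ?h1' ?h2'.
Qed.

Unset Implicit Arguments. Set Strict Implicit. Set Printing Implicit Defensive.

Theorem mainTheorem1 (V : finType) (adj : rel V) (side : V -> V -> bool)
  (adj_sym : symmetric adj) (adj_irr : irreflexive adj)
  (hmodel : exists w, conformal_model adj side [set: V] w)
  (Q U : {set V}) (hQ : prime_node adj Q) (hU : child_transversal adj Q U) :
  prime_graph adj U /\
  exists w1 w2,
    [/\ conformal_model adj side U w1,
        conformal_model adj side U w2,
        ~ circ_equiv w1 w2,
        circ_equiv w2 (reflection w1) &
        forall w, conformal_model adj side U w ->
          circ_equiv w w1 \/ circ_equiv w w2].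
Proof.
have [_ [U' [hU' prU']]] := hQ.
have prU : prime_graph adj U := transversal_prime adj_sym hU hU' prU'.
split => //.
have cc := prime_cutconn adj_sym prU.
have [u0 [v0 [u0U v0U a0]]] := prime_edge adj_sym prU.
have uv0 : u0 != v0 by apply: contraTneq a0 => ->; rewrite adj_irr.
case: hmodel => w0 /conformalP C0.
pose w1 := filter (fun y => y.1 \in U) w0.
have C1 : conf adj side U w1 := @conf_filter V adj side U w0 C0.
have C2 : conf adj side U (reflection w1) := conf_refl C1.
exists w1, (reflection w1); split.
- exact/conformalP.
- exact/conformalP.
- move=> [k Ek].
  have uw1 : uniq w1 by case: C1.
  have M1 : forall z b, z \in U -> (z, b) \in w1 by move=> z b zU; case: C1 => _ mw _ _; rewrite mw.
  have := refl_bit C1 u0U v0U uv0 a0.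
  rewrite Ek OL_rot ?M1 //; last by apply: pair_neq; rewrite eq_sym uv0.
  + by case: (on_left w1 u0 (v0, false)).
  + by apply: pair_neq; rewrite eq_sym uv0.
- by exists 0; rewrite rot0.
move=> w /conformalP C.
pose P := fun y z => on_left w y (z, false) == on_left w1 y (z, false).
have Psym : forall y z, y \in U -> z \in U -> adj y z -> P y z = P z y.
  move=> y z yU zU yz; have ne : y != z by apply: contraTneq yz => ->; rewrite adj_irr.
  by rewrite /P (F1w C yU zU ne yz) (F1w C1 yU zU ne yz); case: (on_left w y _); case: (on_left w1 y _).
have Gam : forall y z z', y \in U -> z \in U -> z' \in U -> adj y z -> adj y z' -> z != z' ->
    ~~ adj z z' -> P y z = P y z'.
  move=> y z z' yU zU z'U yz yz' zz' nzz'.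
  have ne1 : y != z by apply: contraTneq yz => ->; rewrite adj_irr.
  have ne2 : y != z' by apply: contraTneq yz' => ->; rewrite adj_irr.
  have E1 := F2w C yU zU z'U ne1 ne2 zz' yz yz' nzz'.
  have E2 := F2w C1 yU zU z'U ne1 ne2 zz' yz yz' nzz'.
  have z'z : z' != z by rewrite eq_sym.
  have nz'z : ~~ adj z' z by rewrite adj_sym.
  case: C => _ _ _ hs; case: C1 => _ _ _ hs1.
  have [s1 _] := hs z z' zU z'U zz' nzz'; have [s2 _] := hs1 z z' zU z'U zz' nzz'.
  have [s3 _] := hs z' z z'U zU z'z nz'z; have [s4 _] := hs1 z' z z'U zU z'z nz'z.
  rewrite s1 s3 in E1; rewrite s2 s4 in E2.
  move: E1 E2; rewrite /P.
  case: (on_left w y (z, false)); case: (on_left w y (z', false));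
  case: (on_left w1 y (z, false)); case: (on_left w1 y (z', false)) => /=; try done;
  by move=> <- E; try discriminate E.
have Gal := gallai adj_sym adj_irr prU Psym Gam.
case: (boolP (P u0 v0)) => hP.
  left.
  have H : forall c d, c \in U -> d \in U -> c != d -> adj c d ->
      on_left w c (d, false) = on_left w1 c (d, false).
    by move=> c d cU dU cd a; apply/eqP; rewrite -/(P c d) (Gal c d u0 v0).
  have [k Ek] := determ C C1 cc u0U (data_eq C C1 H).
  by exists k.
right.
have H : forall c d, c \in U -> d \in U -> c != d -> adj c d ->
    on_left w c (d, false) = on_left (reflection w1) c (d, false).
  move=> c d cU dU cd a; rewrite (refl_bit C1 cU dU cd a).
  move: hP; rewrite -(Gal c d u0 v0) // /P.
  by case: (on_left w c _); case: (on_left w1 c _).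
have [k Ek] := determ C C2 cc u0U (data_eq C C2 H).
by exists k.
Qed.
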